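(* Let $s\ge 1$, $m=\lfloor (s+1)/2\rfloor$, let $A=(a_{ij})$ be a real $s\times s$ matrix and $b\in\mathbb{R}^s$ with $b_i>0$ for all $i$, satisfying (i) $b_i a_{ij}+b_j a_{ji}-b_ib_j=0$ for $1\le i,j\le s$, and (ii) $b_{s+1-i}=b_i$ for $1\le i\le s$ and $b_j=a_{s+1-i,s+1-j}+a_{ij}$ for $1\le i,j\le s$. Let $B=\mathrm{diag}(b_1,\dots,b_s)$, $e_s=(1,\dots,1)^T\in\mathbb{R}^s$, and $\bar A=(\bar a_{ij})$ with $\bar a_{ij}=a_{ij}-b_j/2$. Let $P=(P_1\ P_2)$ be the orthogonal $s\times s$ matrix, with $P_1$ of size $s\times m$ and $P_2$ of size $s\times(s-m)$, such that for $x\in\mathbb{R}^s$, $P_1^Tx=(y_1,\dots,y_m)^T$ and $P_2^Tx=(y_{m+1},\dots,y_s)^T$, where $y_i=\tfrac{\sqrt2}{2}(x_{s+1-i}+x_i)$ for $1\le i\le\lfloor s/2\rfloor$, $y_m=x_m$ if $s$ is odd, and $y_i=\tfrac{\sqrt2}{2}(x_{s+1-i}-x_i)$ for $m+1\le i\le s$. Let $K=P_1^TB^{1/2}\bar AB^{-1/2}P_2\in\mathbb{R}^{m\times(s-m)}$ and let $K=UDV^T$ be a singular value decomposition, with $U\in\mathbb{R}^{m\times m}$, $V\in\mathbb{R}^{(s-m)\times(s-m)}$ orthogonal and $D\in\mathbb{R}^{m\times(s-m)}$ having diagonal entries $D_{ii}=\sigma_i\ge0$ ($1\le i\le s-m$)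 and zeros elsewhere; if $s$ is odd set $\sigma_m=0$. Let $Q_1=B^{-1/2}P_1U$, $Q_2=B^{-1/2}P_2V$, and $(\alpha_1,\dots,\alpha_m)^T=Q_1^TBe_s$. Let $h\in\mathbb{R}$, $J\in\mathbb{R}^{d\times d}$ and $r\in\mathbb{R}^{sd}$. Assume the matrices $I_d+h^2\sigma_i^2J^2$ ($1\le i\le m$) are invertible and that $$M=I_d-J\,\frac h2\sum_{i=1}^m\alpha_i^2\,(I_d+h^2\sigma_i^2J^2)^{-1}$$ is invertible. Define $R=(Q_1^TB\otimes I_d)\,r+h\,(DQ_2^TB\otimes J)\,r\in\mathbb{R}^{md}$ with blocks $R_1,\dots,R_m\in\mathbb{R}^d$; define $\Delta z\in\mathbb{R}^d$ as the solution of $M\,\Delta z=h\,J\sum_{i=1}^m\alpha_i(I_d+h^2\sigma_i^2J^2)^{-1}R_i$; define $W_i=(I_d+h^2\sigma_i^2J^2)^{-1}\big(R_i+\tfrac{\alpha_i}{2}\Delta z\big)$ for $1\le i\le m$ and $W'=(W_1^T,\dots,W_m^T)^T$; define $W''=-h\,(D^T\otimes J)\,W'+(Q_2^TB\otimes I_d)\,r\in\mathbb{R}^{(s-m)d}$; and set $\Delta Y=(Q_1\otimes I_d)W'+(Q_2\otimes I_d)W''$. Then $\Delta Y$ is the unique solution of the linear system $$\left(I_s\otimes I_d-h\,A\otimes J\right)\Delta Y=r .$$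
   Context: $A,b$ are the coefficients of an $s$-stage implicit Runge–Kutta scheme; condition (i) is symplecticity and (ii) is symmetry (e.g. Gauss collocation methods satisfy both). $\otimes$ denotes the Kronecker product, and $B^{\pm1/2}$ denote the diagonal matrices with entries $b_i^{\pm1/2}$. The system $(I_s\otimes I_d-hA\otimes J)\Delta Y=r$ is the simplified linear system arising in simplified Newton iterations for the stage equations. *)

(* Defs.v *)
From mathcomp Require Import all_boot all_order all_algebra.
From mathcomp Require Export mxtens.
Set Implicit Arguments. Unset Strict Implicit. Unset Printing Implicit Defensive.
Import Order.TTheory GRing.Theory Num.Theory.
Local Open Scope ring_scope.

(* Indices are 0-based: paper index i (1..s) corresponds to ordinal i-1;
   paper index s+1-i corresponds to rev_ord.  The Kronecker product is
   mxtens's [tensmx] (row index (i,k) |-> i*d+k), so block i of a vector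
   in R^{md} consists of entries i*d .. i*d+d-1. *)

Section RKDefs.
Variable R : rcfType.

Definition mhalf (s : nat) : nat := (s.+1)./2.

(* Entry (i,j) (0-based) of P^T, where P^T x = y as in the paper. *)
Definition PTentry (s i j : nat) : R :=
  let c : R := Num.sqrt 2 / 2 in
  if (i < s./2)%N then c * ((j == (s.-1 - i)%N)%:R + (j == i)%:R)
  else if (i < mhalf s)%N then (j == i)%:R
  else c * ((j == (s.-1 - i)%N)%:R - (j == i)%:R).

Definition P1T (s : nat) : 'M[R]_(mhalf s, s) := \matrix_(i, j) PTentry s i j.
Definition P2T (s : nat) : 'M[R]_(s - mhalf s, s) :=
  \matrix_(i, j) PTentry s (mhalf s + i) j.
Definition P1 (s : nat) : 'M[R]_(s, mhalf s) := (P1T s)^T.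
Definition P2 (s : nat) : 'M[R]_(s, s - mhalf s) := (P2T s)^T.

Definition Bmx s (b : 'I_s -> R) : 'M[R]_s := diag_mx (\row_i b i).
Definition Bsqrt s (b : 'I_s -> R) : 'M[R]_s := diag_mx (\row_i Num.sqrt (b i)).
Definition Bisqrt s (b : 'I_s -> R) : 'M[R]_s :=
  diag_mx (\row_i (Num.sqrt (b i))^-1).

Definition Abar s (A : 'M[R]_s) (b : 'I_s -> R) : 'M[R]_s :=
  \matrix_(i, j) (A i j - b j / 2).

Definition Kmx s (A : 'M[R]_s) (b : 'I_s -> R) : 'M[R]_(mhalf s, s - mhalf s) :=
  P1T s *m Bsqrt b *m Abar A b *m Bisqrt b *m P2 s.

Definition Dmx s (sigma : 'I_(mhalf s) -> R) : 'M[R]_(mhalf s, s - mhalf s) :=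
  \matrix_(i, j) (if (i : nat) == j then sigma i else 0).

Definition Q1 s (b : 'I_s -> R) (U : 'M[R]_(mhalf s)) : 'M[R]_(s, mhalf s) :=
  Bisqrt b *m P1 s *m U.
Definition Q2 s (b : 'I_s -> R) (V : 'M[R]_(s - mhalf s)) : 'M[R]_(s, s - mhalf s) :=
  Bisqrt b *m P2 s *m V.

Definition alpha s (b : 'I_s -> R) (U : 'M[R]_(mhalf s)) : 'cV[R]_(mhalf s) :=
  (Q1 b U)^T *m Bmx b *m const_mx 1.

Definition Nmx d (h : R) (J : 'M[R]_d) (sg : R) : 'M[R]_d :=
  1%:M + (h ^+ 2 * sg ^+ 2) *: (J *m J).

Definition Mmx s d (b : 'I_s -> R) (U : 'M[R]_(mhalf s))
  (sigma : 'I_(mhalf s) -> R) (h : R) (J : 'M[R]_d) : 'M[R]_d :=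
  1%:M - J *m ((h / 2) *: \sum_(i < mhalf s)
                  ((alpha b U i 0) ^+ 2 *: invmx (Nmx h J (sigma i)))).

Definition Rvec s d (b : 'I_s -> R) (U : 'M[R]_(mhalf s)) (V : 'M[R]_(s - mhalf s))
  (sigma : 'I_(mhalf s) -> R) (h : R) (J : 'M[R]_d) (r : 'cV[R]_(s * d))
  : 'cV[R]_(mhalf s * d) :=
  tensmx ((Q1 b U)^T *m Bmx b) (1%:M : 'M[R]_d) *m r
  + h *: (tensmx (Dmx sigma *m (Q2 b V)^T *m Bmx b) J *m r).

Definition blk n d (v : 'cV[R]_(n * d)) (i : 'I_n) : 'cV[R]_d :=
  \col_k v (mxtens_index (i, k)) 0.

Definition stack n d (W : 'I_n -> 'cV[R]_d) : 'cV[R]_(n * d) :=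
  \col_k W (mxtens_unindex k).1 (mxtens_unindex k).2 0.

Definition DeltaY s d (b : 'I_s -> R) (U : 'M[R]_(mhalf s)) (V : 'M[R]_(s - mhalf s))
  (sigma : 'I_(mhalf s) -> R) (h : R) (J : 'M[R]_d) (r : 'cV[R]_(s * d))
  : 'cV[R]_(s * d) :=
  let al := alpha b U in
  let Rv := Rvec b U V sigma h J r in
  let Ni i := Nmx h J (sigma i) in
  let M := Mmx b U sigma h J in
  let dz := invmx M *m (h *: (J *m \sum_(i < mhalf s)
                            (al i 0 *: (invmx (Ni i) *m blk Rv i)))) in
  let W i := invmx (Ni i) *m (blk Rv i + (al i 0 / 2) *: dz) in
  let W' := stack W in
  let W'' := - h *: (tensmx (Dmx sigma)^T J *m W')
             + tensmx ((Q2 b V)^T *m Bmx b) (1%:M : 'M[R]_d) *m r in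
  tensmx (Q1 b U) (1%:M : 'M[R]_d) *m W' + tensmx (Q2 b V) (1%:M : 'M[R]_d) *m W''.

End RKDefs.

(* Main.v *)
Require Import Defs.
From mathcomp Require Import all_boot all_order all_algebra.
From mathcomp Require Import mxtens zify ring lra.
Set Implicit Arguments. Unset Strict Implicit. Unset Printing Implicit Defensive.
Import Order.TTheory GRing.Theory Num.Theory.
Local Open Scope ring_scope.

Section P.
Context {R : rcfType}.

Definition cc : R := Num.sqrt 2 / 2.
Lemma cc2 : cc * cc = 1/2.
Proof.
rewrite /cc mulrACA -expr2 sqr_sqrtr ?ler0n //.
by field.
Qed.

Definition uu (s i : nat) : R :=
  if (i < s./2)%N then cc else if (i < mhalf s)%N then 0 else cc.
Definition vv (s i : nat) : R :=
  if (i < s./2)%N then cc else if (i < mhalf s)%N then 1 else - cc.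

Lemma PTform s i k : PTentry R s i k =
  uu s i * (k == (s.-1 - i)%N :> nat)%:R + vv s i * (k == i :> nat)%:R.
Proof.
rewrite /PTentry /uu /vv -/cc.
case: ifP => _; first by rewrite mulrDr.
case: ifP => _; first by rewrite mul0r mul1r add0r.
by rewrite mulrBr mulNr.
Qed.

Lemma sumdelta s (a : nat) (f : nat -> R) : (a < s)%N ->
  \sum_(k < s) (k == a :> nat)%:R * f k = f a.
Proof.
move=> Ha; rewrite (bigD1 (Ordinal Ha)) //= eqxx mul1r big1 ?addr0 //.
move=> k; rewrite -val_eqE /= => /negbTE ->; by rewrite mul0r.
Qed.

Lemma orthoP s i j : (0 < s)%N -> (i < s)%N -> (j < s)%N ->
  \sum_(k < s) PTentry R s i k * PTentry R s j k = (i == j)%:R.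
Proof.
move=> s0 Hi Hj.
have E : forall k : 'I_s, PTentry R s i k * PTentry R s j k =
   (k == (s.-1 - i)%N :> nat)%:R * (uu s i * (uu s j * (k == (s.-1 - j)%N :> nat)%:R + vv s j * (k == j :> nat)%:R))
 + (k == i :> nat)%:R * (vv s i * (uu s j * (k == (s.-1 - j)%N :> nat)%:R + vv s j * (k == j :> nat)%:R)).
  by move=> k; rewrite !PTform; ring.
rewrite (eq_bigr _ (fun k _ => E k)) big_split /=.
rewrite (sumdelta (fun k => uu s i * (uu s j * (k == (s.-1 - j)%N :> nat)%:R + vv s j * (k == j :> nat)%:R))); last by lia.
rewrite (sumdelta (fun k => vv s i * (uu s j * (k == (s.-1 - j)%N :> nat)%:R + vv s j * (k == j :> nat)%:R))) //.
rewrite /uu /vv /mhalf.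
have h2 := (@cc2).
case: (boolP (s.-1 - i == s.-1 - j)%N) => e1;
case: (boolP (s.-1 - i == j)%N) => e2;
case: (boolP (i == s.-1 - j)%N) => e3;
case: (boolP (i == j)%N) => e4;
case: (ltnP i s./2) => o1; case: (ltnP i (s.+1)./2) => o2;
case: (ltnP j s./2) => o3; case: (ltnP j (s.+1)./2) => o4;
  rewrite /= ?mulr0 ?mulr1 ?addr0 ?add0r ?mul0r;
  try (exfalso; lia); lra.
Qed.


Lemma PTrev s i j : (0 < s)%N -> (i < s)%N -> (j < s)%N ->
  PTentry R s i (s - j.+1) = (if (i < mhalf s)%N then 1 else -1) * PTentry R s i j.
Proof.
move=> s0 Hi Hj; rewrite !PTform /uu /vv /mhalf.
have h2 := (@cc2).
case: (boolP (s - j.+1 == s.-1 - i)%N) => e1;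
case: (boolP (s - j.+1 == i)%N) => e2;
case: (boolP (j == s.-1 - i)%N) => e3;
case: (boolP (j == i)%N) => e4;
case: (ltnP i s./2) => o1; case: (ltnP i (s.+1)./2) => o2;
  rewrite /= ?mulr0 ?mulr1 ?addr0 ?add0r ?mul0r;
  try (exfalso; lia); lra.
Qed.

Definition PT s : 'M[R]_s := \matrix_(i, j) PTentry R s i j.

Lemma PT_orth s : (0 < s)%N -> PT s *m (PT s)^T = 1%:M.
Proof.
move=> s0; apply/matrixP => i j; rewrite !mxE.
rewrite (eq_bigr (fun k : 'I_s => PTentry R s i k * PTentry R s j k)); last first.
  by move=> k _; rewrite !mxE.
by rewrite orthoP.
Qed.

Lemma PT_orth' s (k l : 'I_s) : (0 < s)%N ->
  \sum_(i < s) PTentry R s i k * PTentry R s i l = (k == l)%:R.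
Proof.
move=> s0; have := mulmx1C (PT_orth s0) => /matrixP /(_ k l).
rewrite !mxE => <-; apply: eq_bigr => i _; by rewrite !mxE.
Qed.

Lemma mhalf_le s : (0 < s)%N -> (mhalf s <= s)%N.
Proof. rewrite /mhalf; lia. Qed.

Lemma P1TP1 s : (0 < s)%N -> P1T R s *m P1 R s = 1%:M.
Proof.
move=> s0; apply/matrixP => i j; rewrite !mxE.
rewrite (eq_bigr (fun k : 'I_s => PTentry R s i k * PTentry R s j k)); last first.
  by move=> k _; rewrite !mxE.
have := mhalf_le s0; have := ltn_ord i; have := ltn_ord j => *.
rewrite orthoP //; lia.
Qed.

Lemma P2TP2 s : (0 < s)%N -> P2T R s *m P2 R s = 1%:M.
Proof.
move=> s0; apply/matrixP => i j; rewrite !mxE.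
rewrite (eq_bigr (fun k : 'I_s => PTentry R s (mhalf s + i) k * PTentry R s (mhalf s + j) k)); last first.
  by move=> k _; rewrite !mxE.
have := mhalf_le s0; have := ltn_ord i; have := ltn_ord j => *.
rewrite orthoP ?eqn_add2l //; lia.
Qed.

Lemma P1TP2 s : (0 < s)%N -> P1T R s *m P2 R s = 0.
Proof.
move=> s0; apply/matrixP => i j; rewrite !mxE.
rewrite (eq_bigr (fun k : 'I_s => PTentry R s i k * PTentry R s (mhalf s + j) k)); last first.
  by move=> k _; rewrite !mxE.
have := mhalf_le s0; have := ltn_ord i; have := ltn_ord j => *.
rewrite orthoP //; try lia.
have -> : (i == mhalf s + j :> nat) = false by lia.
done.
Qed.

Lemma Pcompl s : (0 < s)%N -> P1 R s *m P1T R s + P2 R s *m P2T R s = 1%:M.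
Proof.
move=> s0; apply/matrixP => k l; rewrite !mxE -(PT_orth' k l s0).
have Hm := mhalf_le s0.
rewrite (eq_bigr (fun i : 'I_(mhalf s) => (fun n : nat => PTentry R s n k * PTentry R s n l) i)); last first.
  by move=> i _; rewrite !mxE.
rewrite [X in _ + X](eq_bigr (fun i : 'I_(s - mhalf s) => (fun n : nat => PTentry R s n k * PTentry R s n l) (mhalf s + i)%N)); last first.
  by move=> i _; rewrite !mxE.
set F := fun n : nat => PTentry R s n k * PTentry R s n l.
rewrite -(big_mkord xpredT F) -(big_mkord xpredT (fun i => F (mhalf s + i)%N)).
rewrite -(big_mkord xpredT F).
have E := big_addn 0 s (mhalf s) xpredT F; rewrite add0n in E.
rewrite [RHS](big_cat_nat _ (n:=mhalf s)) //; congr (_ + _).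
rewrite E big_mkord [RHS]big_mkord.
by apply: eq_bigr => i _; rewrite addnC.
Qed.

End P.

Section Q.
Context {R : rcfType}.

Lemma sum_delta_ord n (a : 'I_n) (f : 'I_n -> R) :
  \sum_(k < n) (a == k)%:R * f k = f a.
Proof.
rewrite (bigD1 a) //= eqxx mul1r big1 ?addr0 //.
by move=> k /negbTE; rewrite eq_sym => ->; rewrite mul0r.
Qed.

Definition Pi s : 'M[R]_s := \matrix_(i, j) ((rev_ord i == j)%:R).

Lemma mulPi_l s n (M : 'M[R]_(s, n)) : Pi s *m M = \matrix_(i, j) M (rev_ord i) j.
Proof.
apply/matrixP => i j; rewrite !mxE.
rewrite (eq_bigr (fun k => (rev_ord i == k)%:R * M k j)) ?sum_delta_ord //.
by move=> k _; rewrite mxE.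
Qed.

Lemma mulPi_r s n (M : 'M[R]_(n, s)) : M *m Pi s = \matrix_(i, j) M i (rev_ord j).
Proof.
apply/matrixP => i j; rewrite !mxE.
rewrite (eq_bigr (fun k => (rev_ord j == k)%:R * M i k)) ?sum_delta_ord //.
move=> k _; rewrite mxE mulrC.
have -> : (rev_ord k == j) = (rev_ord j == k) by by apply/eqP/eqP => [<-|<-]; rewrite rev_ordK.
done.
Qed.

Lemma trPi s : (Pi s)^T = Pi s.
Proof.
apply/matrixP => i j; rewrite !mxE.
have -> : (rev_ord j == i) = (rev_ord i == j) by by apply/eqP/eqP => [<-|<-]; rewrite rev_ordK.
done.
Qed.

Lemma PiPi s : Pi s *m Pi s = 1%:M.
Proof.
rewrite mulPi_l; apply/matrixP => i j; rewrite !mxE rev_ordK; congr (_%:R).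
Qed.

Lemma P1TPi s : (0 < s)%N -> P1T R s *m Pi s = P1T R s.
Proof.
move=> s0; rewrite mulPi_r; apply/matrixP => i j; rewrite !mxE.
have Hm := mhalf_le s0.
rewrite (@PTrev R _ _ _ s0 (@leq_trans _ _ _ (ltn_ord i) Hm) (ltn_ord j)).
by rewrite ltn_ord mul1r.
Qed.

Lemma P2TPi s : (0 < s)%N -> P2T R s *m Pi s = - P2T R s.
Proof.
move=> s0; rewrite mulPi_r; apply/matrixP => i j; rewrite !mxE.
have Hm := mhalf_le s0.
have Hi : (mhalf s + i < s)%N by have := ltn_ord i; lia.
rewrite (@PTrev R _ _ _ s0 Hi (ltn_ord j)).
have -> : (mhalf s + i < mhalf s)%N = false by lia.
by rewrite mulN1r.
Qed.

Lemma PiP1 s : (0 < s)%N -> Pi s *m P1 R s = P1 R s.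
Proof. by move=> s0; rewrite /P1 -trPi -trmx_mul P1TPi. Qed.

Lemma PiP2 s : (0 < s)%N -> Pi s *m P2 R s = - P2 R s.
Proof. by move=> s0; rewrite /P2 -trPi -trmx_mul P2TPi // linearN. Qed.

Lemma mx_eqN0 m n (X : 'M[R]_(m, n)) : X = - X -> X = 0.
Proof.
move=> /matrixP H; apply/matrixP => i j; have := H i j; rewrite !mxE => E.
lra.
Qed.

End Q.

Section B.
Context {R : rcfType}.

Lemma diag1 n (d : 'rV[R]_n) : (forall j, d 0 j = 1) -> diag_mx d = 1%:M.
Proof.
move=> H; apply/matrixP => i j; rewrite !mxE H.
by case: (i == j).
Qed.

Lemma skew_alg (x y a c : R) : x != 0 -> y != 0 ->
  x * x * a + y * y * c - x * x * (y * y) = 0 ->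
  y * (c - x * x / 2) / x = - (x * (a - y * y / 2) / y).
Proof.
move=> hx hy E.
have : y * (c - x * x / 2) / x + x * (a - y * y / 2) / y
  = (x * x * a + y * y * c - x * x * (y * y)) / (x * y) by field; rewrite ?hx ?hy.
rewrite E mul0r => H.
by apply/eqP; rewrite -addr_eq0 H.
Qed.

Lemma alg2 (x y z a : R) : y != 0 -> x * (z - a - z / 2) / y = - (x * (a - z / 2) / y).
Proof. by move=> hy; field. Qed.

Section WithB.
Variable s : nat.
Variable b : 'I_s -> R.
Hypothesis bpos : forall i, 0 < b i.

Lemma sqb_neq0 i : Num.sqrt (b i) != 0.
Proof. by rewrite gt_eqF // sqrtr_gt0. Qed.

Lemma sqb_sq i : Num.sqrt (b i) * Num.sqrt (b i) = b i.
Proof. by rewrite -expr2 sqr_sqrtr // ltW. Qed.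

Lemma BiBs : Bisqrt b *m Bsqrt b = 1%:M.
Proof. rewrite mulmx_diag diag1 // => j; rewrite !mxE; apply: mulVf; exact: sqb_neq0. Qed.

Lemma BsBi : Bsqrt b *m Bisqrt b = 1%:M.
Proof. by rewrite mulmx_diag diag1 // => j; rewrite !mxE divff // sqb_neq0. Qed.

Lemma BiBm : Bisqrt b *m Bmx b = Bsqrt b.
Proof.
rewrite mulmx_diag /Bsqrt; congr diag_mx; apply/matrixP => i j; rewrite !mxE.
apply: (mulfI (sqb_neq0 j)); by rewrite mulrA divff ?sqb_neq0 // mul1r sqb_sq.
Qed.

Lemma BmBi : Bmx b *m Bisqrt b = Bsqrt b.
Proof. by rewrite /Bmx /Bisqrt diag_mxC BiBm. Qed.

Lemma BsBs : Bsqrt b *m Bsqrt b = Bmx b.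
Proof.
rewrite mulmx_diag /Bmx; congr diag_mx; apply/matrixP => i j; rewrite !mxE.
by rewrite sqb_sq.
Qed.

Definition Wm (A : 'M[R]_s) := Bsqrt b *m Abar A b *m Bisqrt b.

Lemma WmE (A : 'M[R]_s) i j : Wm A i j = Num.sqrt (b i) * (A i j - b j / 2) * (Num.sqrt (b j))^-1.
Proof. by rewrite /Wm /Bsqrt /Bisqrt mul_diag_mx mul_mx_diag !mxE. Qed.

Lemma Wm_skew (A : 'M[R]_s) : (forall i j, b i * A i j + b j * A j i - b i * b j = 0) ->
  (Wm A)^T = - Wm A.
Proof.
move=> Hs; apply/matrixP => i j; rewrite [LHS]mxE [RHS]mxE !WmE.
have := @skew_alg (Num.sqrt (b i)) (Num.sqrt (b j)) (A i j) (A j i) (sqb_neq0 i) (sqb_neq0 j).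
rewrite !sqb_sq; apply; exact: Hs.
Qed.



Lemma WPi (A : 'M[R]_s) : (forall i, b (rev_ord i) = b i) ->
  (forall i j, b j = A (rev_ord i) (rev_ord j) + A i j) ->
  Pi s *m Wm A *m Pi s = - Wm A.
Proof.
move=> hb hA; rewrite mulPi_r; apply/matrixP => i j.
rewrite [LHS]mxE mulPi_l [LHS]mxE [RHS]mxE !WmE !hb.
have -> : A (rev_ord i) (rev_ord j) = b j - A i j by rewrite [in RHS](hA i j) addrK.
by apply: alg2; apply: sqb_neq0.
Qed.

Definition ee : 'cV[R]_s := const_mx 1.

Lemma Adecomp (A : 'M[R]_s) :
  A = Bisqrt b *m Wm A *m Bsqrt b + 2^-1 *: (ee *m (ee^T *m Bmx b)).
Proof.
rewrite /Wm !mulmxA BiBs mul1mx -mulmxA BiBs mulmx1.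
rewrite /Bmx mul_mx_diag; apply/matrixP => i j; rewrite !mxE big_ord1 !mxE mulr1.
lra.
Qed.

Lemma PiBse : (forall i, b (rev_ord i) = b i) -> Pi s *m (Bsqrt b *m ee) = Bsqrt b *m ee.
Proof.
move=> hb; rewrite mulPi_l /Bsqrt mul_diag_mx; apply/matrixP => i j; rewrite !mxE.
by rewrite hb.
Qed.

Lemma P1WP1 (A : 'M[R]_s) : (0 < s)%N -> (forall i, b (rev_ord i) = b i) ->
  (forall i j, b j = A (rev_ord i) (rev_ord j) + A i j) ->
  P1T R s *m Wm A *m P1 R s = 0.
Proof.
move=> s0 hb hA; apply: mx_eqN0.
have E : (P1T R s *m Pi s) *m Wm A *m (Pi s *m P1 R s) = P1T R s *m (Pi s *m Wm A *m Pi s) *m P1 R s.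
  by rewrite !mulmxA.
by rewrite P1TPi // PiP1 // WPi // mulmxN mulNmx in E.
Qed.

Lemma P2WP2 (A : 'M[R]_s) : (0 < s)%N -> (forall i, b (rev_ord i) = b i) ->
  (forall i j, b j = A (rev_ord i) (rev_ord j) + A i j) ->
  P2T R s *m Wm A *m P2 R s = 0.
Proof.
move=> s0 hb hA; apply: mx_eqN0.
have E : (P2T R s *m Pi s) *m Wm A *m (Pi s *m P2 R s) = P2T R s *m (Pi s *m Wm A *m Pi s) *m P2 R s.
  by rewrite !mulmxA.
by rewrite P2TPi // PiP2 // WPi // !mulmxN !mulNmx opprK in E.
Qed.

Lemma P2Bse : (0 < s)%N -> (forall i, b (rev_ord i) = b i) ->
  P2T R s *m (Bsqrt b *m ee) = 0.
Proof.
move=> s0 hb; apply: mx_eqN0.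
have E : (P2T R s *m Pi s) *m (Bsqrt b *m ee) = P2T R s *m (Pi s *m (Bsqrt b *m ee)).
  by rewrite !mulmxA.
by rewrite P2TPi // PiBse // mulNmx in E.
Qed.

Lemma P2WP1 (A : 'M[R]_s) : (forall i j, b i * A i j + b j * A j i - b i * b j = 0) ->
  P2T R s *m Wm A *m P1 R s = - (P1T R s *m Wm A *m P2 R s)^T.
Proof.
move=> Hs; rewrite trmx_mul [(_ *m Wm A)^T]trmx_mul Wm_skew // /P2 trmxK /P1.
by rewrite mulNmx mulmxN opprK mulmxA.
Qed.


End WithB.
End B.

Section T.
Context {R : rcfType}.

Lemma tensmxDl m n p q (X Y : 'M[R]_(m, n)) (Z : 'M[R]_(p, q)) :
  tensmx (X + Y) Z = tensmx X Z + tensmx Y Z.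
Proof. by apply/matrixP => i j; rewrite !mxE mulrDl. Qed.

Lemma tensmxNl m n p q (X : 'M[R]_(m, n)) (Z : 'M[R]_(p, q)) :
  tensmx (- X) Z = - tensmx X Z.
Proof. by apply/matrixP => i j; rewrite !mxE mulNr. Qed.

Lemma tensmxZl m n p q c (X : 'M[R]_(m, n)) (Z : 'M[R]_(p, q)) :
  tensmx (c *: X) Z = c *: tensmx X Z.
Proof. by apply/matrixP => i j; rewrite !mxE mulrA. Qed.

Lemma tensmxZr m n p q c (X : 'M[R]_(m, n)) (Z : 'M[R]_(p, q)) :
  tensmx X (c *: Z) = c *: tensmx X Z.
Proof. by apply/matrixP => i j; rewrite !mxE mulrCA. Qed.

Lemma tens11 m n : tensmx (1%:M : 'M[R]_m) (1%:M : 'M[R]_n) = 1%:M.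
Proof.
apply/matrixP => i j.
case: (mxtens_indexP i) => i1 i2; case: (mxtens_indexP j) => j1 j2.
rewrite tensmxE !mxE (inj_eq (can_inj (@mxtens_indexK m n))) xpair_eqE.
by case: (i1 == j1); case: (i2 == j2); rewrite ?mulr1 ?mulr0 ?mul0r.
Qed.

Lemma sum_tens m n (F : 'I_(m * n) -> R) :
  \sum_(l < m * n) F l = \sum_(i < m) \sum_(j < n) F (mxtens_index (i, j)).
Proof.
rewrite pair_big /= (reindex (@mxtens_index m n)) /=.
  by apply: eq_bigr => -[i j] _.
exists (@mxtens_unindex m n) => k _; by rewrite (mxtens_indexK, mxtens_unindexK).
Qed.

Lemma blk_tens m n p d (X : 'M[R]_(m, n)) (Y : 'M[R]_(p, d)) (v : 'cV[R]_(n * d)) i :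
  blk (tensmx X Y *m v) i = \sum_j X i j *: (Y *m blk v j).
Proof.
apply/matrixP => k z; rewrite [z]ord1 !mxE sum_tens summxE.
apply: eq_bigr => j _; rewrite !mxE mulr_sumr; apply: eq_bigr => l _.
by rewrite tensmxE !mxE mulrA.
Qed.

Lemma blk_ext n d (v w : 'cV[R]_(n * d)) : (forall i, blk v i = blk w i) -> v = w.
Proof.
move=> H; apply/matrixP => k z; rewrite [z]ord1.
case: (mxtens_indexP k) => i j.
by have := H i => /matrixP /(_ j 0); rewrite !mxE.
Qed.

Lemma blk_stack n d (W : 'I_n -> 'cV[R]_d) i : blk (stack W) i = W i.
Proof. by apply/matrixP => k z; rewrite [z]ord1 !mxE mxtens_indexK. Qed.

Lemma blkD n d (v w : 'cV[R]_(n * d)) i : blk (v + w) i = blk v i + blk w i.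
Proof. by apply/matrixP => k z; rewrite !mxE. Qed.

Lemma blkN n d (v : 'cV[R]_(n * d)) i : blk (- v) i = - blk v i.
Proof. by apply/matrixP => k z; rewrite !mxE. Qed.

Lemma blkZ n d c (v : 'cV[R]_(n * d)) i : blk (c *: v) i = c *: blk v i.
Proof. by apply/matrixP => k z; rewrite !mxE. Qed.

End T.

Section G.
Context {R : rcfType}.

Lemma lin_lemma a b c (T1 : 'M[R]_(a, b)) (T2 : 'M[R]_(a, c)) w1 w2 P Q (h : R) :
  T1 *m w1 + T2 *m w2 - h *: (T1 *m P - T2 *m Q)
  = T1 *m (w1 - h *: P) + T2 *m (w2 + h *: Q) :> 'cV_a.
Proof.
rewrite mulmxBr mulmxDr -!scalemxAr scalerBr opprB.
by rewrite [RHS]addrACA [- _ + _]addrC.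
Qed.

Lemma zlemma k (w x t e : 'cV[R]_k) (h : R) :
  w - h *: (x + (- h *: t + e)) = (w - h *: x + h ^+ 2 *: t) - h *: e.
Proof.
rewrite !scalerDr scalerA mulrN -expr2 scaleNr opprD opprD opprK !addrA.
done.
Qed.

Lemma sum_diag_sc m d (i : 'I_m) (c : R) (F : 'I_m -> 'cV[R]_d) :
  \sum_j ((i == j)%:R * c) *: F j = c *: F i.
Proof.
rewrite (bigD1 i) //= eqxx mul1r big1 ?addr0 //.
by move=> j /negbTE; rewrite eq_sym => ->; rewrite mul0r scale0r.
Qed.

End G.

Section G2.
Context {R : rcfType}.

Lemma exist_gen s m n d (A : 'M[R]_s) (Q1 : 'M[R]_(s, m)) (Q2 : 'M[R]_(s, n))
  (G1 : 'M[R]_(m, s)) (G2 : 'M[R]_(n, s)) (D : 'M[R]_(m, n)) (E : 'M[R]_(m, s))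
  (al : 'cV[R]_m) (sigma : 'I_m -> R) (h : R) (J : 'M[R]_d) (r : 'cV[R]_(s * d)) :
  Q1 *m G1 + Q2 *m G2 = 1%:M ->
  A *m Q1 = Q1 *m (2^-1 *: (al *m al^T)) - Q2 *m D^T ->
  A *m Q2 = Q1 *m D ->
  (forall i j, (D *m D^T) i j = (i == j)%:R * sigma i ^+ 2) ->
  E = D *m G2 ->
  (forall i, Nmx h J (sigma i) \in unitmx) ->
  (1%:M - J *m ((h / 2) *: \sum_(i < m) ((al i 0) ^+ 2 *: invmx (Nmx h J (sigma i))))) \in unitmx ->
  let Rv := tensmx G1 (1%:M : 'M[R]_d) *m r + h *: (tensmx E J *m r) in
  let Ni i := Nmx h J (sigma i) in
  let M := 1%:M - J *m ((h / 2) *: \sum_(i < m) ((al i 0) ^+ 2 *: invmx (Ni i))) in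
  let dz := invmx M *m (h *: (J *m \sum_(i < m) (al i 0 *: (invmx (Ni i) *m blk Rv i)))) in
  let W i := invmx (Ni i) *m (blk Rv i + (al i 0 / 2) *: dz) in
  let W' := stack W in
  let W'' := - h *: (tensmx D^T J *m W') + tensmx G2 (1%:M : 'M[R]_d) *m r in
  (tensmx (1%:M : 'M[R]_s) (1%:M : 'M[R]_d) - h *: tensmx A J)
    *m (tensmx Q1 (1%:M : 'M[R]_d) *m W' + tensmx Q2 (1%:M : 'M[R]_d) *m W'') = r.
Proof.
move=> F1 AQ1 AQ2 DD EE Nu Mu Rv Ni M dz W W' W''.
set I := (1%:M : 'M[R]_d).
set X := 2^-1 *: (al *m al^T).
have W''E : W'' = - h *: (tensmx D^T J *m W') + tensmx G2 I *m r by [].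
clearbody W''.
have h1 : tensmx A J *m tensmx Q1 I
    = tensmx Q1 I *m tensmx X J - tensmx Q2 I *m tensmx D^T J.
  by rewrite !tensmx_mul mulmx1 !mul1mx AQ1 tensmxDl tensmxNl.
have h2 : tensmx A J *m tensmx Q2 I = tensmx Q1 I *m tensmx D J.
  by rewrite !tensmx_mul mulmx1 mul1mx AQ2.
have h3 : r = tensmx Q1 I *m (tensmx G1 I *m r) + tensmx Q2 I *m (tensmx G2 I *m r).
  by rewrite !mulmxA !tensmx_mul mulmx1 -mulmxDl -tensmxDl F1 tens11 mul1mx.
have h4 : (tensmx (1%:M : 'M[R]_s) I - h *: tensmx A J) *m (tensmx Q1 I *m W' + tensmx Q2 I *m W'')
   = tensmx Q1 I *m W' + tensmx Q2 I *m W''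
     - h *: (tensmx Q1 I *m (tensmx X J *m W' + tensmx D J *m W'') - tensmx Q2 I *m (tensmx D^T J *m W')).
  rewrite mulmxBl tens11 mul1mx -scalemxAl; congr (_ - h *: _).
  rewrite mulmxDr !mulmxA h1 h2 mulmxBl mulmxDr !mulmxA.
  by rewrite addrAC.
rewrite h4 [RHS]h3 lin_lemma; congr (_ + _); last first.
  by rewrite W''E addrAC scaleNr addNr add0r.
congr (_ *m _).
have DZ : h *: (J *m \sum_j (al j 0 *: W j)) = dz.
  set S1 := \sum_(i < m) (al i 0 *: (invmx (Ni i) *m blk Rv i)).
  set S2 := \sum_(i < m) ((al i 0) ^+ 2 *: invmx (Ni i)).
  have E1 : \sum_j (al j 0 *: W j) = S1 + 2^-1 *: (S2 *m dz).
    rewrite /S1 /S2 mulmx_suml scaler_sumr -big_split /=; apply: eq_bigr => j _.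
    rewrite /W mulmxDr -scalemxAr scalerDr -scalemxAl !scalerA; congr (_ + _ *: _).
    by rewrite /=; field.
  have Mdz : M *m dz = h *: (J *m S1) by rewrite /dz mulKVmx.
  have Mdz' : M *m dz = dz - J *m ((h / 2) *: S2) *m dz by rewrite /M mulmxBl mul1mx.
  rewrite E1 mulmxDr scalerDr -Mdz Mdz'.
  have -> : h *: (J *m (2^-1 *: (S2 *m dz))) = J *m ((h / 2) *: S2) *m dz.
    by rewrite -!scalemxAr -scalemxAl scalerA mulmxA.
  by rewrite subrK.
have RvE : Rv = tensmx G1 I *m r + h *: (tensmx E J *m r) by [].
clearbody Rv.
have Z : W' - h *: (tensmx X J *m W') + h ^+ 2 *: (tensmx (D *m D^T) (J *m J) *m W') = Rv.
  apply: blk_ext => i.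
  rewrite !blkD blkN !blkZ !blk_tens /W' blk_stack.
  under eq_bigr do rewrite blk_stack.
  under [X in _ + h ^+ 2 *: X = _]eq_bigr do rewrite blk_stack DD.
  rewrite sum_diag_sc.
  have SUMX : \sum_j X i j *: (J *m W j) = (al i 0 / 2) *: (J *m \sum_j (al j 0 *: W j)).
    rewrite mulmx_sumr scaler_sumr; apply: eq_bigr => j _.
    rewrite -scalemxAr scalerA /X !mxE big_ord1 !mxE.
    by congr (_ *: _); rewrite /=; ring.
  rewrite SUMX scalerA mulrC -scalerA DZ.
  have NW : Ni i *m W i = blk Rv i + (al i 0 / 2) *: dz by rewrite /W mulKVmx ?Nu.
  have NWe : Ni i *m W i = W i + (h ^+ 2 * sigma i ^+ 2) *: (J *m J *m W i).
    by rewrite /Ni /Nmx mulmxDl mul1mx -scalemxAl.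
  by rewrite scalerA addrAC -NWe NW addrK.
rewrite W''E mulmxDr -scalemxAr mulmxA tensmx_mul [in X in _ + X]mulmxA tensmx_mul mulmx1 -EE.
by rewrite zlemma Z RvE addrK.
Qed.

End G2.

Section M.
Context {R : rcfType}.

Lemma cBiBm s (b : 'I_s -> R) p (X : 'M[R]_(p, s)) : (forall i, 0 < b i) ->
  X *m Bisqrt b *m Bmx b = X *m Bsqrt b.
Proof. by move=> bp; rewrite -mulmxA BiBm. Qed.
Lemma cBmBi s (b : 'I_s -> R) p (X : 'M[R]_(p, s)) : (forall i, 0 < b i) ->
  X *m Bmx b *m Bisqrt b = X *m Bsqrt b.
Proof. by move=> bp; rewrite -mulmxA BmBi. Qed.
Lemma cBsBi s (b : 'I_s -> R) p (X : 'M[R]_(p, s)) : (forall i, 0 < b i) ->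
  X *m Bsqrt b *m Bisqrt b = X.
Proof. by move=> bp; rewrite -mulmxA BsBi // mulmx1. Qed.
Lemma cBiBs s (b : 'I_s -> R) p (X : 'M[R]_(p, s)) : (forall i, 0 < b i) ->
  X *m Bisqrt b *m Bsqrt b = X.
Proof. by move=> bp; rewrite -mulmxA BiBs // mulmx1. Qed.

Lemma trBi s (b : 'I_s -> R) : (Bisqrt b)^T = Bisqrt b.
Proof. exact: tr_diag_mx. Qed.
Lemma trBs s (b : 'I_s -> R) : (Bsqrt b)^T = Bsqrt b.
Proof. exact: tr_diag_mx. Qed.
Lemma trBm s (b : 'I_s -> R) : (Bmx b)^T = Bmx b.
Proof. exact: tr_diag_mx. Qed.

Lemma GAQ s (b : 'I_s -> R) (A : 'M[R]_s) p q (Pa : 'M[R]_(s, p)) (Pb : 'M[R]_(s, q))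
  (Ua : 'M[R]_p) (Ub : 'M[R]_q) : (forall i, 0 < b i) ->
  ((Bisqrt b *m Pa *m Ua)^T *m Bmx b) *m (A *m (Bisqrt b *m Pb *m Ub)) =
  Ua^T *m (Pa^T *m Wm b A *m Pb) *m Ub
  + 2^-1 *: ((Ua^T *m (Pa^T *m (Bsqrt b *m ee s))) *m (Ub^T *m (Pb^T *m (Bsqrt b *m ee s)))^T).
Proof.
move=> bp; rewrite {1}(Adecomp bp A) !trmx_mul !trBi !trBs !trmxK.
rewrite mulmxDl mulmxDr -scalemxAl -scalemxAr; congr (_ + _ *: _).
  by rewrite !mulmxA cBiBm // cBsBi // cBsBi.
by rewrite !mulmxA cBiBm // cBmBi.
Qed.


Lemma QG s (b : 'I_s -> R) p (P : 'M[R]_(s, p)) (Uo : 'M[R]_p) : (forall i, 0 < b i) ->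
  Uo *m Uo^T = 1%:M ->
  (Bisqrt b *m P *m Uo) *m ((Bisqrt b *m P *m Uo)^T *m Bmx b) = Bisqrt b *m (P *m P^T) *m Bsqrt b.
Proof.
move=> bp UU; rewrite !trmx_mul !trBi !mulmxA cBiBm //.
by rewrite -(mulmxA _ Uo) UU mulmx1.
Qed.

Lemma DDlem m n (sigma : 'I_m -> R) (Dm : 'M[R]_(m, n)) :
  (forall i : 'I_m, (n <= i)%N -> sigma i = 0) ->
  Dm = \matrix_(i, j) (if (i : nat) == j then sigma i else 0) ->
  forall i j, (Dm *m Dm^T) i j = (i == j)%:R * sigma i ^+ 2.
Proof.
move=> hs -> i j; rewrite !mxE.
under eq_bigr do rewrite !mxE.
case: (ltnP i n) => Hi.
  rewrite (bigD1 (Ordinal Hi)) //= eqxx big1 ?addr0; last first.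
    move=> k; rewrite -val_eqE /= eq_sym => /negbTE ->; by rewrite mul0r.
  case: (eqVneq i j) => [<-|ne]; first by rewrite eqxx mul1r expr2.
  have -> : ((j : nat) == i) = false by apply/negbTE; rewrite eq_sym -val_eqE /= in ne *.
  by rewrite mulr0 mul0r.
rewrite hs // expr2 mulr0 mulr0 big1 // => k _.
have -> : ((i : nat) == k) = false by apply/negbTE; have := ltn_ord k; lia.
by rewrite mul0r.
Qed.

End M.

Theorem mainTheorem2 (R : rcfType) (s d : nat) (A : 'M[R]_s) (b : 'I_s -> R)
  (U : 'M[R]_(mhalf s)) (V : 'M[R]_(s - mhalf s)) (sigma : 'I_(mhalf s) -> R)
  (h : R) (J : 'M[R]_d) (r : 'cV[R]_(s * d)) :
  (0 < s)%N ->
  (forall i, 0 < b i) ->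
  (* (i) symplecticity *)
  (forall i j, b i * A i j + b j * A j i - b i * b j = 0) ->
  (* (ii) symmetry *)
  (forall i, b (rev_ord i) = b i) ->
  (forall i j, b j = A (rev_ord i) (rev_ord j) + A i j) ->
  (* K = U D V^T is a singular value decomposition *)
  U^T *m U = 1%:M -> V^T *m V = 1%:M ->
  (forall i : 'I_(mhalf s), (i < s - mhalf s)%N -> 0 <= sigma i) ->
  (forall i : 'I_(mhalf s), (s - mhalf s <= i)%N -> sigma i = 0) ->
  Kmx A b = U *m Dmx sigma *m V^T ->
  (* invertibility hypotheses *)
  (forall i, Nmx h J (sigma i) \in unitmx) ->
  Mmx b U sigma h J \in unitmx ->
  let DY := DeltaY b U V sigma h J r in
  let S := tensmx (1%:M : 'M[R]_s) (1%:M : 'M[R]_d) - h *: tensmx A J in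
  S *m DY = r /\ (forall Y : 'cV[R]_(s * d), S *m Y = r -> Y = DY).
Proof.
move=> s0 bp Hsym hb hA UU VV _ hsig HK Nu Mu DY S.
have UU' : U *m U^T = 1%:M by apply: mulmx1C.
have VV' : V *m V^T = 1%:M by apply: mulmx1C.
set Q1m := Q1 b U; set Q2m := Q2 b V.
set G1 := Q1m^T *m Bmx b; set G2 := Q2m^T *m Bmx b.
have F1 : Q1m *m G1 + Q2m *m G2 = 1%:M.
  rewrite /Q1m /Q2m /G1 /G2 /Q1 /Q2 !QG // -mulmxDl -mulmxDr /P1 /P2 !trmxK Pcompl //.
  by rewrite mulmx1 BiBs.
have KW : Kmx A b = P1T R s *m Wm b A *m P2 R s by rewrite /Kmx /Wm !mulmxA.
have alE : alpha b U = U^T *m (P1T R s *m (Bsqrt b *m ee s)).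
  rewrite /alpha /Q1 !trmx_mul !trBi /P1 trmxK !mulmxA cBiBm //.
have R11 : G1 *m (A *m Q1m) = 2^-1 *: (alpha b U *m (alpha b U)^T).
  rewrite /G1 /Q1m /Q1 GAQ // /P1 trmxK P1WP1 // mulmx0 mul0mx add0r -alE.
  done.
have R21 : G2 *m (A *m Q1m) = - (Dmx sigma)^T.
  rewrite /G2 /Q1m /Q1 /Q2 GAQ // /P1 /P2 !trmxK P2Bse // mulmx0 mul0mx (scaler0 _ (2^-1)) addr0.
  rewrite P2WP1 // -KW HK !trmx_mul trmxK mulmxN mulNmx !mulmxA VV mul1mx.
  by rewrite -mulmxA UU mulmx1.
have R12 : G1 *m (A *m Q2m) = Dmx sigma.
  rewrite /G1 /Q2m /Q1 /Q2 GAQ // /P1 /P2 !trmxK P2Bse // mulmx0 trmx0 mulmx0 (scaler0 _ (2^-1)) addr0.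
  by rewrite -KW HK !mulmxA UU mul1mx -mulmxA VV mulmx1.
have R22 : G2 *m (A *m Q2m) = 0.
  rewrite /G2 /Q2m /Q2 GAQ // /P2 !trmxK P2Bse // P2WP2 //; rewrite !mulmx0 !mul0mx (scaler0 _ (2^-1)) addr0.
  done.
have AQ1 : A *m Q1m = Q1m *m (2^-1 *: (alpha b U *m (alpha b U)^T)) - Q2m *m (Dmx sigma)^T.
  by rewrite -[A *m Q1m]mul1mx -F1 mulmxDl -(mulmxA Q1m G1) -(mulmxA Q2m G2) R11 R21 mulmxN.
have AQ2 : A *m Q2m = Q1m *m Dmx sigma.
  by rewrite -[A *m Q2m]mul1mx -F1 mulmxDl -(mulmxA Q1m G1) -(mulmxA Q2m G2) R12 R22 mulmx0 addr0.
have DD := DDlem hsig (erefl (Dmx sigma)).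
have EX : forall r0, S *m DeltaY b U V sigma h J r0 = r0.
  move=> r0.
  exact: (exist_gen r0 F1 AQ1 AQ2 DD (esym (mulmxA _ _ _)) Nu Mu).
have SU : S \in unitmx.
  pose Xm := \matrix_(i, k) (DeltaY b U V sigma h J (delta_mx k 0) i 0) : 'M[R]_(s * d).
  suff : S *m Xm = 1%:M by case/mulmx1_unit.
  have colX : forall k, col k Xm = DeltaY b U V sigma h J (delta_mx k 0).
    by move=> k; apply/matrixP => i j; rewrite !mxE [j]ord1.
  have E k : col k (S *m Xm) = col k 1%:M.
    by rewrite !colE mul1mx -mulmxA -colE colX EX.
  apply/matrixP => i k.
  by move: (E k) => /matrixP /(_ i 0); rewrite !mxE.
split; first exact: EX.
move=> Y HY.
by rewrite -[Y](mulKmx SU) HY -{1}(EX r) mulKmx.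
Qed.
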